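(* Let $\mathbf F$ be an oriented edge-incidence matrix for an unweighted connected undirected graph $G=(V,\mathcal E)$ without self-loops. Then $\|\mathbf F^\dagger\|_{\max}\le1$.
   Context: For an unweighted graph the adjacency matrix $\boldsymbol\Phi$ has entries in $\{0,1\}$. An oriented edge-incidence matrix $\mathbf F\in\mathbb R^{n\times|\mathcal E|}$ has, for each edge between nodes $j$ and $k$, a column with entry $\sqrt{\Phi_{jk}}=1$ in row $j$, $-1$ in row $k$, and zeros elsewhere. $\mathbf F^\dagger$ is the Moore–Penrose pseudoinverse and $\|\cdot\|_{\max}$ the maximum absolute entry. *)

(* Defs.v *)
From mathcomp Require Import all_boot all_order all_algebra.
Set Implicit Arguments. Unset Strict Implicit. Unset Printing Implicit Defensive.
Import Order.TTheory GRing.Theory Num.Theory.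
Local Open Scope ring_scope.

Definition simple_graph (n : nat) (e : rel 'I_n) : Prop :=
  symmetric e /\ irreflexive e.

Definition connected_graph (n : nat) (e : rel 'I_n) : Prop :=
  forall x y : 'I_n, connect e x y.

(* Column c of F is the oriented incidence vector of edge (j,k):
   entry sqrt(Phi_jk) = 1 in row j, -1 in row k, 0 elsewhere. *)
Definition col_edge (R : numDomainType) (n m : nat) (F : 'M[R]_(n, m))
  (c : 'I_m) (j k : 'I_n) : Prop :=
  F j c = 1 /\ F k c = -1 /\ (forall i, i != j -> i != k -> F i c = 0).

(* F is an oriented edge-incidence matrix of the (unweighted) graph e:
   every column is the oriented incidence vector of some edge, and every
   (undirected) edge {j,k} corresponds to exactly one column, with an
   arbitrary orientation. Hence m = |E|. *)
Definition oriented_incidence (R : numDomainType) (n m : nat) (e : rel 'I_n)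
  (F : 'M[R]_(n, m)) : Prop :=
  (forall c : 'I_m, exists j k : 'I_n, e j k /\ col_edge F c j k) /\
  (forall j k : 'I_n, e j k ->
     exists! c : 'I_m, col_edge F c j k \/ col_edge F c k j).

(* X is the Moore--Penrose pseudoinverse of A (the four Penrose conditions;
   for real matrices it exists and is unique). *)
Definition is_MP_pinv (R : numDomainType) (n m : nat)
  (A : 'M[R]_(n, m)) (X : 'M[R]_(m, n)) : Prop :=
  [/\ A *m X *m A = A, X *m A *m X = X,
      (A *m X)^T = A *m X & (X *m A)^T = X *m A].

Definition mx_maxnorm (R : numDomainType) (p q : nat) (A : 'M[R]_(p, q)) : R :=
  \big[Num.max/0]_(i < p) \big[Num.max/0]_(j < q) `|A i j|.

(* Main.v *)
Require Import Defs.
From mathcomp Require Import all_boot all_order all_algebra.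
From mathcomp Require Import ring lra.
Import Order.TTheory GRing.Theory Num.Theory.
Local Open Scope ring_scope.

Lemma col_sum (R : realFieldType) (n m : nat) (F : 'M[R]_(n, m)) c a b
  (g : 'I_n -> R) :
  col_edge F c a b -> a != b -> \sum_u F u c * g u = g a - g b.
Proof.
move=> [Ha [Hb H0]] ab.
rewrite (bigD1 a) //= (bigD1 b) /=; last by rewrite eq_sym.
rewrite big1 ?Ha ?Hb; first by rewrite addr0 mul1r mulN1r.
move=> u /andP [ub ua]; by rewrite H0 // mul0r.
Qed.

Arguments col_sum {R n m F c a b} g.

Lemma cut_nonneg (R : realFieldType) (p q t : R) :
  0 <= (p - q) * ((t <= p)%R%:R - (t <= q)%R%:R).
Proof.
case: (lerP t p) => hp; case: (lerP t q) => hq /=;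
  rewrite ?subrr ?mulr0 //.
- rewrite subr0 mulr1; lra.
- rewrite sub0r mulrN1; lra.
Qed.

Theorem lemmaA4 (R : realFieldType) (n m : nat) (e : rel 'I_n)
  (F : 'M[R]_(n, m)) (Fp : 'M[R]_(m, n)) :
  simple_graph e -> connected_graph e -> oriented_incidence e F ->
  is_MP_pinv F Fp ->
  mx_maxnorm Fp <= 1.
Proof.
move=> [esymm eirr] econn [Hcol Hedge] [P1 P2 P3 P4].
have HFT : F^T *m (F *m Fp) = F^T.
  by rewrite -{1}P3 -trmx_mul P1.
have HFp : Fp = F^T *m (Fp^T *m Fp).
  by rewrite -{1}P2 -P4 trmx_mul mulmxA.
have main : forall c i, `|Fp c i| <= 1.
  move=> c i.
  pose d u := (F *m Fp) u i.
  pose v u := (Fp^T *m Fp) u i.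
  have Hx : forall c' a b, col_edge F c' a b -> a != b -> Fp c' i = v a - v b.
    move=> c' a b ce ab; rewrite HFp mxE -(col_sum v ce ab).
    by apply: eq_bigr => u _; rewrite mxE.
  have Hd : forall c' a b, col_edge F c' a b -> a != b ->
      d a - d b = (a == i)%:R - (b == i)%:R.
    move=> c' a b ce ab.
    have E1 : \sum_u F u c' * d u = F i c'.
      have := congr1 (fun M : 'M[R]_(m, n) => M c' i) HFT.
      rewrite /= [in X in X = _ -> _]mxE [in X in _ = X -> _]mxE => <-.
      by apply: eq_bigr => u _; rewrite mxE.
    have E2 : F i c' = \sum_u F u c' * (u == i)%:R.
      transitivity ((F^T *m 1%:M) c' i); first by rewrite mulmx1 mxE.
      by rewrite mxE; apply: eq_bigr => u _; rewrite !mxE.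
    by rewrite -(col_sum d ce ab) E1 E2 (col_sum (fun u => (u == i)%:R) ce ab).
  pose f u := d u - (u == i)%:R.
  have Hf : forall u, f u = f i.
    move=> u.
    have cl : closed e [pred w | f w == f i].
      move=> a b eab /=.
      have ab : a != b by apply/eqP => E; move: eab; rewrite E eirr.
      have [c' [[ce|ce] _]] := Hedge a b eab.
        have := Hd c' a b ce ab => E.
        rewrite !inE; suff -> : f a = f b by [].
        rewrite /f; lra.
      have := Hd c' b a ce; rewrite eq_sym => /(_ ab) => E.
      rewrite !inE; suff -> : f a = f b by [].
      rewrite /f; lra.
    have := closed_connect cl (econn i u); rewrite !inE eqxx => /esym.
    by move/eqP.
  have Hsum : \sum_u d u = 0.
    transitivity (\sum_u \sum_c' F u c' * Fp c' i).
      by apply: eq_bigr => u _; rewrite /d mxE.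
    rewrite exchange_big /=; apply: big1 => c' _.
    have [a [b [eab ce]]] := Hcol c'.
    have ab : a != b by apply/eqP => E; move: eab; rewrite E eirr.
    rewrite -big_distrl /= -(@mulr1 _ (\sum_u F u c')).
    under eq_bigr do rewrite -[F _ _]mulr1.
    by rewrite (col_sum (fun _ => 1) ce ab) subrr !mul0r.
  have f0le : f i <= 0.
    have E : \sum_u d u = n%:R * f i + 1.
      transitivity (\sum_u (f i + (u == i)%:R)).
        by apply: eq_bigr => u _; rewrite -(Hf u) /f subrK.
      rewrite big_split /= sumr_const card_ord mulr_natl; congr (_ + _).
      by rewrite (bigD1 i) //= eqxx big1 ?addr0 // => u /negPf ->.
    rewrite Hsum in E.
    rewrite leNgt; apply/negP => fpos.
    have : 0 <= n%:R * f i by rewrite mulr_ge0 // ltW.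
    lra.
  have cut : forall t, \sum_u (t <= v u)%R%:R * d u <= 1.
    move=> t.
    have -> : \sum_u (t <= v u)%R%:R * d u =
       f i * \sum_u (t <= v u)%R%:R + \sum_u (t <= v u)%R%:R * (u == i)%:R.
      rewrite mulr_sumr -big_split /=; apply: eq_bigr => u _.
      by rewrite -(Hf u) /f; ring.
    have -> : \sum_u (t <= v u)%R%:R * (u == i)%:R = (t <= v i)%R%:R :> R.
      rewrite (bigD1 i) //= eqxx mulr1 big1 ?addr0 //.
      by move=> u ui; rewrite (negPf ui) mulr0.
    have : 0 <= \sum_u (t <= v u)%R%:R :> R by apply: sumr_ge0 => u _.
    have : (t <= v i)%R%:R <= 1 :> R by case: (t <= v i).
    move=> h1 h2.
    have : f i * \sum_u (t <= v u)%R%:R <= 0 :> R.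
      by rewrite mulr_le0_ge0.
    lra.
  have cutE : forall t, \sum_u (t <= v u)%R%:R * d u =
      \sum_c' Fp c' i * \sum_u F u c' * (t <= v u)%R%:R.
    move=> t.
    transitivity (\sum_u \sum_c' (t <= v u)%R%:R * (F u c' * Fp c' i)).
      by apply: eq_bigr => u _; rewrite /d mxE mulr_sumr.
    rewrite exchange_big /=; apply: eq_bigr => c' _.
    rewrite mulr_sumr; apply: eq_bigr => u _; ring.
  have term : forall t c', 0 <= Fp c' i * \sum_u F u c' * (t <= v u)%R%:R.
    move=> t c'.
    have [a [b [eab ce]]] := Hcol c'.
    have ab : a != b by apply/eqP => E; move: eab; rewrite E eirr.
    rewrite (Hx _ _ _ ce ab) (col_sum (fun u => (t <= v u)%R%:R) ce ab).
    exact: cut_nonneg.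
  have bound : forall t, Fp c i * \sum_u F u c * (t <= v u)%R%:R <= 1.
    move=> t; apply: le_trans (cut t); rewrite cutE (bigD1 c) //=.
    by rewrite lerDl; apply: sumr_ge0 => c' _; apply: term.
  have [a [b [eab ce]]] := Hcol c.
  have ab : a != b by apply/eqP => E; move: eab; rewrite E eirr.
  have := bound (Num.max (v a) (v b)).
  rewrite (Hx _ _ _ ce ab) (col_sum (fun u => (Num.max (v a) (v b) <= v u)%R%:R) ce ab).
  case: (ltgtP (v a) (v b)) => h.
  - rewrite lexx (leNgt (v b) (v a)) h /= => H.
    rewrite ler_norml; lra.
  - rewrite lexx (leNgt (v a) (v b)) h /= => H.
    rewrite ler_norml; lra.
  - by rewrite h subrr normr0 ler01.
rewrite /mx_maxnorm; apply: bigmax_le => // c _.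
by apply: bigmax_le => // i _; apply: main.
Qed.
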